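(* The message-passing axiom fails for $TS_{PP}$ (and hence for PSO): let $x\neq y$ be global variables, $t=1$, $t'=2$ two distinct threads, $a_w=wr(y,1)$, $a_r=rd(y,r_1,1)$, $b=wr(x,1)$ (so $\mathit{var}(a_w)=\mathit{var}(a_r)\neq\mathit{var}(b)$, $wrval(a_w)=rdval(a_r)$). Then $$\mathit{vmax}_{PP}(t,b)\cap\mathrm{wlp}(T_{PP}(t',a_r),\mathit{vmax}_{PP}(t',b))\not\subseteq\mathrm{wlp}(T_{PP}(t,a_w),\mathrm{wlp}(T_{PP}(t',a_r),\mathit{vmax}_{PP}(t',b))).$$ In particular the axiom MP — for all $a_w,a_r,b$ and $t\neq t'$ with $(a_w,a_r)\in sync$, $\mathit{var}(a_w)=\mathit{var}(a_r)\neq\mathit{var}(b)$, $wrval(a_w)=rdval(a_r)$: $\mathit{vmax}(t,b)\cap\mathrm{wlp}(T(t',a_r),\mathit{vmax}(t',b))\subseteq\mathrm{wlp}(T(t,a_w),\mathrm{wlp}(T(t',a_r),\mathit{vmax}(t',b)))$ — does not hold for any relation $sync$ containing the pair $(wr(y,1),rd(y,r_1,1))$.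
   Context: PPSO: threads $\mathsf{Tid}$, global variables $\mathsf{Var_G}$, values $\mathsf{Val}$ (containing $0,1$). States $\sigma=(s,wb)$ with $s:\mathsf{Var_G}\to\mathsf{Val}$ and $wb:(\mathsf{Tid}\times\mathsf{Var_G})\to(\mathsf{Val}\times\mathbb{Q})^*$; entries $(v,q)$, timestamp $ts(v,q)=q$. $val_\sigma(t,x)$: value of the last entry of $wb^{t,x}$ if nonempty, else $s(x)$. Steps: $rd(x,r,v)$ by $t$ leaves $\sigma$ unchanged, requires $v=val_\sigma(t,x)$; $fence$ by $t$ leaves $\sigma$ unchanged, requires all $wb^{t,x}$ empty; $wr(x,v)$ by $t$ appends $(v,q)$ to $wb^{t,x}$ for a $q$ occurring in no buffer and exceeding all timestamps in $wb^{t,x}$; a flush by $t$ removes the first entry $(v,q)$ of some $wb^{t,x}$ and sets $s(x):=v$, allowed only if all entries of all other buffers $wb^{t',x'}$, $(t',x')\neq(t,x)$, have timestamps $>q$. $T_{PP}(t,a)$ = any finite sequence of flushes (by any threads) followed by the step of $a$ by $t$. $\mathrm{wlp}(R,P)=\{\sigma\mid\forall\sigma':(\sigma,\sigma')\in R\Rightarrow\sigma'\in P\}$. $maxTS(t,x)=\{\sigma\mid\sigma.wb^{t,x}\neq\langle\rangle\wedge\forall t',q:((\cdot,q)\in\sigma.wb^{t',x}\Rightarrow ts(last(\sigma.wb^{t,x}))\geq q)\}\cup\{\sigma\mid\forall t':\sigma.wb^{t',x}=\langle\rangle\}$; $\mathit{vmax}_{PP}(t,a)=maxTS(t,\mathit{var}(a))$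 for reads and writes $a$, and $\Sigma_{PP}$ for $a=fence$. $\mathit{var}$, $wrval$, $rdval$ give the variable, written value, read value of an action. *)

(* Defs.v *)
From Stdlib Require List.
From mathcomp Require Import all_boot all_order all_algebra.

Set Implicit Arguments. Unset Strict Implicit. Unset Printing Implicit Defensive.
Import Order.TTheory GRing.Theory Num.Theory.
Local Open Scope ring_scope.

Section PPSO.
Variables (Tid Var Val Reg : Type).

Definition wbentry := (Val * rat)%type.
Definition ts (e : wbentry) : rat := e.2.

Record state := State {
  st_s  : Var -> Val;
  st_wb : Tid -> Var -> seq wbentry }.

Inductive action :=
| wr of Var & Val
| rd of Var & Reg & Val
| fence.

Definition var (a : action) : option Var :=
  match a with wr x _ => Some x | rd x _ _ => Some x | fence => None end.
Definition wrval (a : action) : option Val :=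
  match a with wr _ v => Some v | _ => None end.
Definition rdval (a : action) : option Val :=
  match a with rd _ _ v => Some v | _ => None end.

Definition val_of (σ : state) (t : Tid) (x : Var) : Val :=
  match st_wb σ t x with
  | [::] => st_s σ x
  | e :: l => (last e l).1
  end.

Definition step (t : Tid) (a : action) (σ σ' : state) : Prop :=
  match a with
  | rd x _ v => σ' = σ /\ v = val_of σ t x
  | fence => σ' = σ /\ (forall x, st_wb σ t x = [::])
  | wr x v => exists q : rat,
      (forall t2 x2 e, List.In e (st_wb σ t2 x2) -> ts e <> q) /\
      (forall e, List.In e (st_wb σ t x) -> ts e < q) /\
      st_s σ' = st_s σ /\
      st_wb σ' t x = rcons (st_wb σ t x) (v, q) /\
      (forall t2 x2, (t2, x2) <> (t, x) -> st_wb σ' t2 x2 = st_wb σ t2 x2)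
  end.

Definition flush_by (t : Tid) (σ σ' : state) : Prop :=
  exists (x : Var) (v : Val) (q : rat) (rest : seq wbentry),
    st_wb σ t x = (v, q) :: rest /\
    (forall t2 x2, (t2, x2) <> (t, x) ->
       forall e, List.In e (st_wb σ t2 x2) -> q < ts e) /\
    st_wb σ' t x = rest /\
    (forall t2 x2, (t2, x2) <> (t, x) -> st_wb σ' t2 x2 = st_wb σ t2 x2) /\
    st_s σ' x = v /\
    (forall y, y <> x -> st_s σ' y = st_s σ y).

Definition flush (σ σ' : state) : Prop := exists t, flush_by t σ σ'.

Inductive flushes : state -> state -> Prop :=
| flushes_refl σ : flushes σ σ
| flushes_step σ σ1 σ' : flush σ σ1 -> flushes σ1 σ' -> flushes σ σ'.

Definition T_PP (t : Tid) (a : action) (σ σ'' : state) : Prop :=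
  exists σ', flushes σ σ' /\ step t a σ' σ''.

Definition wlp (R : state -> state -> Prop) (P : state -> Prop) : state -> Prop :=
  fun σ => forall σ', R σ σ' -> P σ'.

Definition maxTS (t : Tid) (x : Var) (σ : state) : Prop :=
  (exists e l, st_wb σ t x = e :: l /\
     forall t' f, List.In f (st_wb σ t' x) -> ts f <= ts (last e l))
  \/ (forall t', st_wb σ t' x = [::]).

Definition vmax_PP (t : Tid) (a : action) : state -> Prop :=
  match a with
  | wr x _ | rd x _ _ => maxTS t x
  | fence => fun _ => True
  end.

Definition MP (sync : action -> action -> Prop) : Prop :=
  forall (aw ar b : action) (t t' : Tid), t <> t' -> sync aw ar ->
    (exists z w, var aw = Some z /\ var ar = Some z /\ var b = Some w /\ z <> w) ->
    (exists v, wrval aw = Some v /\ rdval ar = Some v) ->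
    forall σ, vmax_PP t b σ -> wlp (T_PP t' ar) (vmax_PP t' b) σ ->
      wlp (T_PP t aw) (wlp (T_PP t' ar) (vmax_PP t' b)) σ.

End PPSO.

(* Main.v *)
Require Import Defs.
From mathcomp Require Import all_boot all_order all_algebra.
From Stdlib Require Import ClassicalEpsilon Classical.
Import Order.TTheory GRing.Theory Num.Theory.

Section S.
Variables (Tid Var Val Reg : Type) (x y : Var) (t t' : Tid) (zero one : Val) (r1 : Reg).
Hypotheses (Hxy : x <> y) (Htt : t <> t') (H01 : zero <> one).

Definition ite {A : Type} (P : Prop) (a b : A) : A :=
  if excluded_middle_informative P then a else b.

Lemma iteT {A} (P : Prop) (a b : A) : P -> ite P a b = a.
Proof. rewrite /ite; case: excluded_middle_informative => //. Qed.
Lemma iteF {A} (P : Prop) (a b : A) : ~ P -> ite P a b = b.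
Proof. rewrite /ite; case: excluded_middle_informative => //. Qed.

Definition wb0 : Tid -> Var -> seq (wbentry Val) :=
  fun t2 x2 => ite ((t2, x2) = (t, x)) [:: (one, 0%R)] [::].
Definition wb1 : Tid -> Var -> seq (wbentry Val) :=
  fun t2 x2 => ite ((t2, x2) = (t, y)) [:: (one, (-1)%R)] (wb0 t2 x2).
Definition wb2 : Tid -> Var -> seq (wbentry Val) :=
  fun t2 x2 => ite ((t2, x2) = (t, y)) [::] (wb1 t2 x2).
Definition s0 : Var -> Val := fun _ => zero.
Definition s2 : Var -> Val := fun z => ite (z = y) one zero.

Definition σ0 := State s0 wb0.
Definition σ1 := State s0 wb1.
Definition σ2 := State s2 wb2.

Lemma wb0_ts t2 x2 e : List.In e (wb0 t2 x2) -> ts e = 0%R.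
Proof.
rewrite /wb0 /ite; case: excluded_middle_informative => _ /=; last by [].
by case=> [<-|[]].
Qed.

Lemma wb0_y t2 : wb0 t2 y = [::].
Proof. rewrite /wb0 iteF //; case=> _ h; exact: Hxy (esym h). Qed.

Lemma inv_flushes (s s' : state Tid Var Val) : flushes s s' ->
  st_s s y = zero -> (forall t2, st_wb s t2 y = [::]) ->
  st_s s' y = zero /\ (forall t2, st_wb s' t2 y = [::]).
Proof.
elim=> [//|a b c [t2 [x' [v [q [rest [E1 [_ [E3 [E4 [E5 E6]]]]]]]]]] _ IH] Ha Hb.
have Nx : x' <> y by move=> e; move: E1; rewrite e Hb.
apply: IH.
  by rewrite E6 // => e; exact: Nx (esym e).
move=> t3; rewrite E4 ?Hb //; case=> _ e; exact: Nx (esym e).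
Qed.

Lemma part1 : ~ (forall σ : state Tid Var Val,
        vmax_PP t (wr Reg x one) σ ->
        wlp (T_PP t' (rd y r1 one)) (vmax_PP t' (wr Reg x one)) σ ->
        wlp (T_PP t (wr Reg y one))
            (wlp (T_PP t' (rd y r1 one)) (vmax_PP t' (wr Reg x one))) σ).
Proof.
move=> H.
have := H σ0.
have h1 : vmax_PP t (wr Reg x one) σ0.
  left; exists (one, 0%R), [::]; split; first by rewrite /= /wb0 iteT.
  by move=> t3 f /wb0_ts ->.
have h2 : wlp (T_PP t' (rd y r1 one)) (vmax_PP t' (wr Reg x one)) σ0.
  move=> s' [sm [Hfl [_ Hv]]].
  have [Hs Hw] := @inv_flushes _ _ Hfl erefl wb0_y.
  by exfalso; apply: H01; rewrite Hv /val_of Hw Hs.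
move=> /(_ h1 h2 σ1) H1.
have : vmax_PP t' (wr Reg x one) σ2.
  apply: H1.
    exists σ0; split; first exact: flushes_refl.
    exists (-1)%R; split.
      by move=> t2 x2 e /wb0_ts ->.
    split; first by move=> e; rewrite /= wb0_y.
    split; first by [].
    split; first by rewrite /= /wb1 iteT // wb0_y.
    by move=> t2 x2 ne; rewrite /= /wb1 iteF.
  exists σ2; split.
    apply: flushes_step; last exact: flushes_refl.
    exists t, y, one, (-1)%R, [::]; split; first by rewrite /= /wb1 iteT.
    split.
      by move=> t2 x2 ne e; rewrite /= /wb1 iteF // => /wb0_ts ->.
    split; first by rewrite /= /wb2 iteT.
    split; first by move=> t2 x2 ne; rewrite /= /wb2 iteF.
    split; first by rewrite /= /s2 iteT.
    by move=> z nz; rewrite /= /s2 iteF.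
  split; first by [].
  rewrite /val_of /= /wb2 iteF; last by case=> e; exact: Htt (esym e).
  rewrite /wb1 iteF; last by case=> e; exact: Htt (esym e).
  by rewrite wb0_y /s2 iteT.
case.
  move=> [e [l [E _]]]; move: E.
  rewrite /= /wb2 iteF; last by move=> E1; apply: Htt; congruence.
  rewrite /wb1 iteF; last by move=> E1; apply: Htt; congruence.
  by rewrite /wb0 iteF //; move=> E1; apply: Htt; congruence.
move=> /(_ t); rewrite /= /wb2 iteF; last by move=> E1; apply: Hxy; congruence.
rewrite /wb1 iteF; last by move=> E1; apply: Hxy; congruence.
by rewrite /wb0 iteT.
Qed.
End S.

Theorem mainTheorem5 (Tid Var Val Reg : Type) (x y : Var) (t t' : Tid)
  (zero one : Val) (r1 : Reg) :
  x <> y -> t <> t' -> zero <> one ->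
  (~ (forall σ : state Tid Var Val,
        vmax_PP t (wr Reg x one) σ ->
        wlp (T_PP t' (rd y r1 one)) (vmax_PP t' (wr Reg x one)) σ ->
        wlp (T_PP t (wr Reg y one))
            (wlp (T_PP t' (rd y r1 one)) (vmax_PP t' (wr Reg x one))) σ))
  /\ (forall sync : action Var Val Reg -> action Var Val Reg -> Prop,
        sync (wr Reg y one) (rd y r1 one) -> ~ MP Tid sync).
Proof.
move=> Hxy Htt H01.
have P := @part1 Tid Var Val Reg x y t t' zero one r1 Hxy Htt H01.
split=> // sync Hs HMP; apply: P => σ h1 h2.
apply: (HMP _ _ _ t t' Htt Hs) => //.
  by exists y, x; do !split => //; move=> e; exact: Hxy (esym e).
by exists one.
Qed.
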